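(* Let $k\geq 1$ be a fixed integer and let $P=P_1\star A_k\star P_2$ for arbitrary (possibly empty) finite posets $P_1,P_2$. Then there is a constant $c=c(P)$ such that for all integers $t\geq 2$ and all $n$ sufficiently large, $\mathrm{sat}^{\star}([t]^n,P)\leq (nt^2)^{c}$.
   Context: For positive integers $n,t$, $[n]=\{1,\dots,n\}$ and the hypergrid $[t]^n$ is the set of functions $f:[n]\to[t]$, partially ordered by $f\leq g$ iff $f(i)\leq g(i)$ for all $i\in[n]$. An induced copy of a poset $P$ in a family $\mathcal{F}\subseteq[t]^n$ is an injective map $\phi:P\to\mathcal{F}$ such that $\phi(x)\leq\phi(y)$ iff $x\leq_P y$. A family $\mathcal{F}\subseteq[t]^n$ is induced $P$-free if it contains no induced copy of $P$; it is induced $P$-saturated if it is induced $P$-free and for every $f\in[t]^n\setminus\mathcal{F}$ the family $\mathcal{F}\cup\{f\}$ contains an induced copy of $P$. Whenever $P$ embeds as an induced subposet of $[t]^n$, $\mathrm{sat}^{\star}([t]^n,P)$ denotes the minimum size of an induced $P$-saturated family in $[t]^n$. $A_k$ is the antichain on $k$ elements. For posets $P,Q$, the poset sum $P\star Q$ is the disjoint union of $P$ and $Q$ with relations added so that every element of $P$ lies below every element of $Q$; $\star$ is associative. *)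

(* Defs.v *)
From mathcomp Require Import all_boot.
Set Implicit Arguments. Unset Strict Implicit. Unset Printing Implicit Defensive.

Definition is_partial_order (T : finType) (le : rel T) : Prop :=
  [/\ reflexive le, antisymmetric le & transitive le].

Definition antichain_le (k : nat) : rel 'I_k := fun x y => x == y.

Definition star_le (T1 T2 : finType) (le1 : rel T1) (le2 : rel T2)
  : rel (T1 + T2)%type :=
  fun u v =>
    match u, v with
    | inl x, inl y => le1 x y
    | inr x, inr y => le2 x y
    | inl _, inr _ => true
    | inr _, inl _ => false
    end.

(* The hypergrid [t]^n: functions [n] -> [t], encoded as {ffun 'I_n -> 'I_t}
   (values 0..t-1 instead of 1..t), ordered pointwise. *)
Definition grid (n t : nat) := {ffun 'I_n -> 'I_t}.

Definition grid_le (n t : nat) (f g : grid n t) : bool :=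
  [forall i, (f i <= g i)%N].

Definition induced_copy (T : finType) (le : rel T) (n t : nat)
  (F : {set grid n t}) (phi : {ffun T -> grid n t}) : bool :=
  [&& injectiveb phi, [forall x, phi x \in F] &
      [forall x, forall y, grid_le (phi x) (phi y) == le x y]].

Definition induced_free (T : finType) (le : rel T) (n t : nat)
  (F : {set grid n t}) : bool :=
  ~~ [exists phi : {ffun T -> grid n t}, induced_copy le F phi].

Definition induced_saturated (T : finType) (le : rel T) (n t : nat)
  (F : {set grid n t}) : bool :=
  induced_free le F &&
  [forall f : grid n t, (f \notin F) ==>
     [exists phi : {ffun T -> grid n t}, induced_copy le (f |: F) phi]].

Definition embeds (T : finType) (le : rel T) (n t : nat) : bool :=
  [exists phi : {ffun T -> grid n t}, induced_copy le [set: grid n t] phi].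

(* sat*([t]^n, P): minimum size of an induced P-saturated family.
   (The default #|grid n t| is an upper bound for any family size, so this
   is the true minimum whenever a saturated family exists.) *)
Definition sat_star (T : finType) (le : rel T) (n t : nat) : nat :=
  \big[minn/#|{: grid n t}|]_(F : {set grid n t} | induced_saturated le F) #|F|.

(* Main.v *)
Require Import Defs.
From mathcomp Require Import all_boot.
From mathcomp Require Import zify.
Set Implicit Arguments. Unset Strict Implicit. Unset Printing Implicit Defensive.

Lemma card_interval (n lo hi : nat) : lo <= hi -> hi <= n ->
  #|[set i : 'I_n | lo <= i < hi]| = hi - lo.
Proof.
move=> lohi hin; rewrite (_ : hi = lo + (hi - lo)) in hin *; last by lia.
rewrite addKn; move: (hi - lo) hin => d; elim: d => [|d IH] hin.
  apply/eqP; rewrite cards_eq0; apply/eqP/setP => i; rewrite !inE; apply/negbTE; lia.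
have hlt : lo + d < n by lia.
have -> : [set i : 'I_n | lo <= i < lo + d.+1] =
   Ordinal hlt |: [set i : 'I_n | lo <= i < lo + d].
  apply/setP => i; rewrite !inE -val_eqE /=; lia.
rewrite cardsU1 IH; last by lia.
by rewrite inE /= ltnn andbF.
Qed.

Lemma card_sub_interval (n lo hi : nat) (A : {set 'I_n}) : hi <= n ->
  (forall i, i \in A -> lo <= i < hi) -> #|A| <= hi - lo.
Proof.
move=> hin hA; case: (leqP lo hi) => lohi.
  rewrite -(card_interval lohi hin); apply: subset_leq_card; apply/subsetP => i /hA.
  by rewrite inE.
have -> : A = set0 by apply/setP => i; rewrite inE; apply/negbTE/negP => /hA; lia.
by rewrite cards0.
Qed.

Lemma sum_bool_card (n : nat) (b : 'I_n -> bool) :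
  \sum_(i < n) (b i : nat) = #|[set i | b i]|.
Proof.
rewrite -sum1_card [RHS]big_mkcond /=; apply: eq_bigr => i _; rewrite inE; by case: (b i).
Qed.

Lemma cardU4 (T : finType) (A B C D E : {set T}) :
  (forall x, x \in A -> [|| x \in B, x \in C, x \in D | x \in E]) ->
  #|A| <= #|B| + #|C| + #|D| + #|E|.
Proof.
move=> h; apply: (@leq_trans #|B :|: C :|: D :|: E|).
  apply: subset_leq_card; apply/subsetP => x /h; rewrite !inE; by case/or4P => ->; rewrite ?orbT.
rewrite !cardsU; lia.
Qed.

Definition rank (n tp : nat) (g : grid n tp.+1) : nat := \sum_(i < n) (g i : nat).

Lemma grid_leP (n t : nat) (f g : grid n t) : reflect (forall i, f i <= g i) (grid_le f g).
Proof. exact: forallP. Qed.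

Lemma grid_le_refl (n t : nat) (f : grid n t) : grid_le f f.
Proof. by apply/grid_leP. Qed.

Lemma rank_le (n tp : nat) (f g : grid n tp.+1) : grid_le f g -> rank f <= rank g.
Proof. by move/grid_leP => h; apply: leq_sum => i _. Qed.

Lemma rank_lt (n tp : nat) (f g : grid n tp.+1) : grid_le f g -> f != g -> rank f < rank g.
Proof.
move/grid_leP => h ne.
have [i hi] : exists i, f i < g i.
  apply/existsP; apply: contraR ne; rewrite negb_exists => /forallP h2.
  apply/eqP/ffunP => i; apply: val_inj; apply/eqP; rewrite eqn_leq h.
  by have := h2 i; rewrite -leqNgt.
rewrite /rank (bigD1 i) //= [X in _ < X](bigD1 i) //=.
have : \sum_(j < n | j != i) (f j : nat) <= \sum_(j < n | j != i) (g j : nat) by apply: leq_sum => j _.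
by rewrite -addSn; apply: leq_add.
Qed.

Lemma rank_ge_card (n tp : nat) (g : grid n tp.+1) (P : pred 'I_n) :
  (forall i, P i -> 0 < g i) -> #|[set i | P i]| <= rank g.
Proof.
move=> h; rewrite -sum_bool_card; apply: leq_sum => i _.
by case: (boolP (P i)) => // /h.
Qed.

Lemma rank_le_card (n tp : nat) (g : grid n tp.+1) (P : pred 'I_n) :
  (forall i, P i -> g i < tp) -> rank g + #|[set i | P i]| <= n * tp.
Proof.
move=> h; rewrite -sum_bool_card /rank -big_split /=.
rewrite -[n in n * _]card_ord -sum_nat_const; apply: leq_sum => i _.
case: (boolP (P i)) => [/h|_] /=; first by lia.
by rewrite addn0 -ltnS.
Qed.

Definition chainb (T : finType) (le : rel T) (A : {set T}) : bool :=
  [forall u, forall v, (u \in A) ==> (v \in A) ==> (le u v || le v u)].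
Definition belowb (T : finType) (le : rel T) (A : {set T}) (y : T) : bool :=
  [forall u, (u \in A) ==> le u y].
Definition ht (T : finType) (le : rel T) (y : T) : nat :=
  \max_(A : {set T} | chainb le A && belowb le A y) #|A|.

Lemma po_refl (T : finType) (le : rel T) : is_partial_order le -> reflexive le.
Proof. by case. Qed.
Lemma po_anti (T : finType) (le : rel T) : is_partial_order le -> antisymmetric le.
Proof. by case. Qed.
Lemma po_trans (T : finType) (le : rel T) : is_partial_order le -> transitive le.
Proof. by case. Qed.

Lemma ht_ge1 (T : finType) (le : rel T) (po : is_partial_order le) (y : T) : 0 < ht le y.
Proof.
apply: (@leq_trans #|[set y]|); first by rewrite cards1.
rewrite /ht; apply: (@leq_bigmax_cond _ (fun A : {set T} => chainb le A && belowb le A _) (fun A : {set T} => #|A|)); apply/andP; split.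
  by apply/forallP => u; apply/forallP => v; rewrite !inE; apply/implyP => /eqP-> ; apply/implyP => /eqP->; rewrite (po_refl po).
by apply/forallP => u; rewrite inE; apply/implyP => /eqP->; rewrite (po_refl po).
Qed.

Lemma ht_le_card (T : finType) (le : rel T) (y : T) : ht le y <= #|T|.
Proof. by apply/bigmax_leqP => A _; apply: max_card. Qed.

Lemma ht_chain (T : finType) (le : rel T) (po : is_partial_order le) (y : T) :
  exists A, [&& chainb le A, belowb le A y & #|A| == ht le y].
Proof.
have hpos : 0 < #|[pred A : {set T} | chainb le A && belowb le A y]|.
  apply/card_gt0P; exists [set y]; rewrite inE; apply/andP; split.
    by apply/forallP => u; apply/forallP => v; rewrite !inE; apply/implyP => /eqP-> ; apply/implyP => /eqP->; rewrite (po_refl po).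
  by apply/forallP => u; rewrite inE; apply/implyP => /eqP->; rewrite (po_refl po).
have [A hA hmax] := eq_bigmax_cond (fun A : {set T} => #|A|) hpos.
exists A; rewrite inE in hA; case/andP: hA => -> -> /=; by rewrite /ht hmax.
Qed.

Lemma ht_lt (T : finType) (le : rel T) (po : is_partial_order le) (y y' : T) :
  le y y' -> y != y' -> ht le y < ht le y'.
Proof.
move=> hle hne; have [A /and3P [hc hb /eqP hA]] := ht_chain po y.
have yA : y' \notin A.
  apply/negP => hy; move/forallP: hb => /(_ y') /implyP /(_ hy) h2.
  by move: hne; rewrite (po_anti po (_ : le y y' && le y' y)) ?eqxx // hle h2.
apply: (@leq_trans #|y' |: A|); first by rewrite cardsU1 yA hA.
rewrite /ht; apply: (@leq_bigmax_cond _ (fun A : {set T} => chainb le A && belowb le A _) (fun A : {set T} => #|A|)); apply/andP; split.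
  have bel : forall w, w \in A -> le w y' by move=> w wA; apply: (po_trans po) hle; move/forallP: hb => /(_ w) /implyP; apply.
  have memU : forall w, w \in y' |: A -> w = y' \/ w \in A by move=> w; rewrite !inE => /orP [/eqP->|]; [left|right].
  apply/forallP => u; apply/forallP => v.
  apply/implyP => /memU [->|uA]; apply/implyP => /memU [->|vA].
  - by rewrite (po_refl po).
  - by rewrite bel // orbT.
  - by rewrite bel.
  by move/forallP: hc => /(_ u) /forallP /(_ v); rewrite uA vA.
apply/forallP => u; apply/implyP; rewrite !inE => /orP [/eqP->|uA].
  by rewrite (po_refl po).
apply: (po_trans po) hle.
by move/forallP: hb => /(_ u) /implyP; apply.
Qed.

Definition Mc (T : finType) : nat := #|T|.+1.
Definition Xc (T : finType) : finType := (T + 'I_(Mc T * #|T|))%type.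
Definition Dset (T : finType) (le : rel T) (y : T) : {set T} := [set z | le z y].
Definition pad (T : finType) (le : rel T) (y : T) : nat := Mc T * ht le y - #|Dset le y|.
Definition Sset (T : finType) (le : rel T) (y : T) : {set Xc T} :=
  [set u : Xc T | match u with inl z => le z y | inr q => (nat_of_ord q) < pad le y end].
Definition nv (tp : nat) (v : nat) : 'I_tp.+1 := inord v.
Definition phi (T : finType) (le : rel T) (n tp : nat) (ka : {ffun Xc T -> 'I_n}) (y : T)
  : grid n tp.+1 :=
  [ffun i => nv tp ([exists u, (u \in Sset le y) && (ka u == i)] : nat)].

Lemma nvE (tp v : nat) : v <= tp -> (nv tp v : nat) = v.
Proof. by move=> h; rewrite /nv inordK. Qed.

Lemma pad_facts (T : finType) (le : rel T) (po : is_partial_order le) (y : T) :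
  #|Dset le y| + pad le y = Mc T * ht le y /\ pad le y <= Mc T * #|T|.
Proof.
have h1 := ht_ge1 po y; have h2 := ht_le_card le y.
have h3 : #|Dset le y| <= #|T| by apply: max_card.
rewrite /pad /Mc; split; last by apply: leq_trans (leq_subr _ _) _; rewrite leq_mul2l h2 orbT.
rewrite subnKC //; apply: (leq_trans h3); apply: (@leq_trans (#|T|.+1 * 1)); first by lia.
by rewrite leq_mul2l h1 orbT.
Qed.

Lemma card_Sset (T : finType) (le : rel T) (po : is_partial_order le) (y : T) :
  #|Sset le y| = Mc T * ht le y.
Proof.
have [hs hp] := pad_facts po y.
have -> : Sset le y = (inl @: Dset le y) :|: (inr @: [set q : 'I_(Mc T * #|T|) | 0 <= q < pad le y]).
  apply/setP => u; rewrite !inE; case: u => [z|q].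
    rewrite mem_imset ?inE //=; last exact: inl_inj.
    case: imsetP => [[q _]|] //; by rewrite orbF.
  case: imsetP => [[z _]|_] //=.
  by rewrite mem_imset ?inE //=; exact: inr_inj.
rewrite cardsU.
have -> : (inl @: Dset le y) :&: (inr @: [set q : 'I_(Mc T * #|T|) | 0 <= q < pad le y]) = set0.
  apply/setP => u; rewrite !inE; apply/negbTE/andP => [[/imsetP [z _ ->] /imsetP [q _]]] //.
rewrite cards0 subn0 card_imset; last exact: inl_inj.
rewrite card_imset; last exact: inr_inj.
rewrite card_interval // subn0; exact: hs.
Qed.

Lemma Sset_sub (T : finType) (le : rel T) (po : is_partial_order le) (y y' : T) :
  (Sset le y \subset Sset le y') = le y y'.
Proof.
apply/subsetP/idP => [h|hle u].
  by have := h (inl y); rewrite !inE (po_refl po); apply.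
rewrite !inE; case: u => [z|q] h; first by apply: (po_trans po) hle.
case: (eqVneq y y') => [<-|hne] //.
have hlt := ht_lt po hle hne.
have [hs hp] := pad_facts po y; have [hs' hp'] := pad_facts po y'.
have hD : #|Dset le y'| <= #|T| by apply: max_card.
have : Mc T * (ht le y).+1 <= Mc T * ht le y' by rewrite leq_mul2l hlt orbT.
rewrite mulnS.
have hM : Mc T = #|T|.+1 by []. move: hs hs' hp hp'; set a := Mc T * ht le y; set b := Mc T * ht le y'; move: hM; set M := Mc T; set cT := #|T|; move: (q : nat) h => qq h; lia.
Qed.

Lemma phiE (T : finType) (le : rel T) (n tp : nat) (ka : {ffun Xc T -> 'I_n}) (y : T) i :
  0 < tp -> (phi le tp ka y i : nat) = [exists u, (u \in Sset le y) && (ka u == i)].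
Proof. by move=> htp; rewrite ffunE nvE //; case: existsP. Qed.

Lemma phi_le (T : finType) (le : rel T) (po : is_partial_order le) (n tp : nat)
  (ka : {ffun Xc T -> 'I_n}) (y y' : T) :
  0 < tp -> injective ka -> grid_le (phi le tp ka y) (phi le tp ka y') = le y y'.
Proof.
move=> htp kinj; rewrite -(Sset_sub po); apply/grid_leP/subsetP => [h u uS|h i].
  have := h (ka u); rewrite !phiE //.
  have -> : [exists u0, (u0 \in Sset le y) && (ka u0 == ka u)] by apply/existsP; exists u; rewrite uS eqxx.
  case: existsP => // [[u' /andP [u'S /eqP /kinj e]]] _; by rewrite -e.
rewrite !phiE //; case: existsP => // [[u /andP [uS /eqP <-]]].
by have -> : [exists u0, (u0 \in Sset le y') && (ka u0 == ka u)] by apply/existsP; exists u; rewrite h // eqxx.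
Qed.

Lemma rank_phi (T : finType) (le : rel T) (po : is_partial_order le) (n tp : nat)
  (ka : {ffun Xc T -> 'I_n}) (y : T) :
  0 < tp -> injective ka -> rank (phi le tp ka y) = Mc T * ht le y.
Proof.
move=> htp kinj; rewrite /rank (eq_bigr (fun i => ([exists u, (u \in Sset le y) && (ka u == i)] : nat))); last first.
  by move=> i _; rewrite phiE.
rewrite sum_bool_card -(card_Sset po) -(card_imset _ kinj); apply: eq_card => i.
rewrite inE; apply/existsP/imsetP => [[u /andP [uS /eqP <-]]|[u uS ->]].
  by exists u.
by exists u; rewrite uS eqxx.
Qed.

Definition Lset (T : finType) (le : rel T) (n tp : nat) : {set grid n tp.+1} :=
  [set phi le tp p.1 p.2 | p in [set p : {ffun Xc T -> 'I_n} * T | injectiveb p.1]].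

Lemma rank_L (T : finType) (le : rel T) (po : is_partial_order le) (n tp : nat) x :
  0 < tp -> x \in Lset le n tp -> exists y, rank x = Mc T * ht le y.
Proof.
move=> htp /imsetP [[ka y]]; rewrite inE /= => /injectiveP kinj ->.
by exists y; rewrite (rank_phi po).
Qed.

Lemma L_nocopy (T : finType) (le : rel T) (po : is_partial_order le) (n tp : nat)
  (x : grid n tp.+1) (psi : T -> grid n tp.+1) :
  0 < tp -> x \in Lset le n tp ->
  (forall u v, grid_le (psi u) (psi v) = le u v) ->
  (forall u, grid_le (psi u) x && (psi u != x)) ->
  (forall u, psi u \in Lset le n tp) -> False.
Proof.
move=> htp xL hpsi hbel hL.
have [y hx] := rank_L po htp xL.
have [A /and3P [hc _ /eqP hA]] := ht_chain po y.
have h1 := ht_ge1 po y.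
pose s1 := [seq rank (psi u) | u <- enum A].
have us1 : uniq s1.
  rewrite map_inj_in_uniq ?enum_uniq // => u v; rewrite !mem_enum => uA vA e.
  apply/eqP; apply: contraT => ne.
  have hpi : psi u != psi v.
    apply: contra ne => /eqP e2; apply/eqP; apply: (po_anti po).
    by rewrite -!hpsi e2 grid_le_refl.
  move/forallP: hc => /(_ u) /forallP /(_ v); rewrite uA vA /= => /orP [] hle.
    have := rank_lt (_ : grid_le (psi u) (psi v)) hpi; rewrite e ltnn; apply; by rewrite hpsi.
  have := rank_lt (_ : grid_le (psi v) (psi u)) (_ : psi v != psi u); rewrite e ltnn; apply.
    by rewrite hpsi.
  by rewrite eq_sym.
pose s2 := [seq Mc T * j | j <- iota 1 (ht le y).-1].
have sub : {subset s1 <= s2}.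
  move=> r /mapP [u uA ->].
  have [y' hy'] := rank_L po htp (hL u).
  have hlt : rank (psi u) < rank x by case/andP: (hbel u) => a b; apply: rank_lt.
  rewrite hy' hx ltn_mul2l /= in hlt.
  rewrite hy'; apply: map_f; rewrite mem_iota (ht_ge1 po y') /=; lia.
have := uniq_leq_size us1 sub; rewrite !size_map size_iota -cardE hA; lia.
Qed.

Definition neg (n tp : nat) (g : grid n tp.+1) : grid n tp.+1 := [ffun i => rev_ord (g i)].

Lemma negE (n tp : nat) (g : grid n tp.+1) i : (neg g i : nat) = tp - g i.
Proof. by rewrite ffunE /=; lia. Qed.

Lemma negK (n tp : nat) (g : grid n tp.+1) : neg (neg g) = g.
Proof. by apply/ffunP => i; apply: val_inj; rewrite /= !negE; have := ltn_ord (g i); lia. Qed.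

Lemma neg_inj (n tp : nat) : injective (@neg n tp).
Proof. by move=> f g e; rewrite -(negK f) e negK. Qed.

Lemma neg_le (n tp : nat) (f g : grid n tp.+1) : grid_le (neg f) (neg g) = grid_le g f.
Proof.
apply/grid_leP/grid_leP => h i; have := h i; rewrite !negE;
  have := ltn_ord (g i); have := ltn_ord (f i); lia.
Qed.

Lemma rank_neg (n tp : nat) (g : grid n tp.+1) : rank (neg g) + rank g = n * tp.
Proof.
rewrite /rank -big_split /= -[n in n * _]card_ord -sum_nat_const; apply: eq_bigr => i _.
rewrite negE; have := ltn_ord (g i); lia.
Qed.

Definition dual (T : finType) (le : rel T) : rel T := fun x y => le y x.

Lemma po_dual (T : finType) (le : rel T) : is_partial_order le -> is_partial_order (dual le).
Proof.
case=> r a t; split.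
- by move=> x; apply: r.
- by move=> x y; rewrite /dual andbC; apply: a.
- by move=> x y z h1 h2; rewrite /dual; apply: t h1.
Qed.

Definition Uset (T : finType) (le : rel T) (n tp : nat) : {set grid n tp.+1} :=
  [set neg g | g in Lset (dual le) n tp].

Definition cvec (n tp k : nat) (j m : nat) : grid n tp.+1 :=
  [ffun i : 'I_n => nv tp (if ((i : nat) == j) || ((k.-1 <= i) && (i < m)) then tp else 0)].

Lemma cvecE (n tp k : nat) (j m : nat) i :
  (cvec n tp k j m i : nat) = if ((i : nat) == j) || ((k.-1 <= i) && (i < m)) then tp else 0.
Proof. by rewrite ffunE nvE //; case: ifP. Qed.

Definition Cset (n tp k s : nat) : {set grid n tp.+1} :=
  [set cvec n tp k p.1 p.2 | p : ('I_k.-1 * 'I_n.+1)%type in [set p : ('I_k.-1 * 'I_n.+1)%type | (k.-1 + s <= p.2) && (p.2 + s <= n)]].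

Lemma cvec_mono (n tp k : nat) (j m m' : nat) : m <= m' ->
  grid_le (cvec n tp k j m) (cvec n tp k j m').
Proof.
move=> h; apply/grid_leP => i; rewrite !cvecE.
case: ifP => // /orP [->|/andP [h1 h2]] //; by rewrite h1 (leq_trans h2 h) orbT.
Qed.

Lemma rank_C (n tp k s : nat) x : 0 < tp -> x \in Cset n tp k s ->
  s <= rank x /\ rank x + s <= n * tp.
Proof.
move=> htp /imsetP [[j m]]; rewrite inE /= => /andP [h1 h2] ->.
have hj := ltn_ord j; have hm := ltn_ord m.
split.
  apply: (@leq_trans #|[set i : 'I_n | k.-1 <= i < m]|).
    rewrite card_interval; lia.
  apply: rank_ge_card => i hi; rewrite cvecE hi orbT; lia.
apply: (@leq_trans (rank (cvec n tp k j m) + #|[set i : 'I_n | m <= i < n]|)).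
  rewrite card_interval; lia.
apply: rank_le_card => i /andP [hi1 hi2]; rewrite cvecE.
have -> : ((i : nat) == j) = false by apply/negbTE; lia.
have -> : (i < m) = false by apply/negbTE; lia.
by rewrite andbF.
Qed.

Lemma cvec_incomp (n tp k : nat) (j j' m m' : nat) : 0 < tp -> j < n ->
  j != j' -> j < k.-1 -> ~~ grid_le (cvec n tp k j m) (cvec n tp k j' m').
Proof.
move=> htp hjn hne hj; apply/grid_leP => /(_ (Ordinal hjn)); rewrite !cvecE /= eqxx /=.
rewrite (negbTE hne) /=; have -> : (k.-1 <= j) = false by apply/negbTE; lia.
by rewrite /=; lia.
Qed.

Lemma rank_Lle (T : finType) (le : rel T) (po : is_partial_order le) (n tp : nat) x :
  0 < tp -> x \in Lset le n tp -> rank x <= Mc T * #|T|.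
Proof.
move=> htp /(rank_L po htp) [y ->]; rewrite leq_mul2l; apply/orP; right; exact: ht_le_card.
Qed.

Lemma rank_Uge (T : finType) (le : rel T) (po : is_partial_order le) (n tp : nat) x :
  0 < tp -> x \in Uset le n tp -> n * tp <= rank x + Mc T * #|T|.
Proof.
move=> htp /imsetP [g gL ->]; have := rank_Lle (po_dual po) htp gL.
have := rank_neg g; lia.
Qed.

Definition Gset (T1 : finType) (le1 : rel T1) (T2 : finType) (le2 : rel T2) (n tp k s : nat)
  : {set grid n tp.+1} :=
  Lset le1 n tp :|: Cset n tp k s :|: Uset le2 n tp.


Lemma G_free (T1 : finType) (le1 : rel T1) (po1 : is_partial_order le1)
  (T2 : finType) (le2 : rel T2) (po2 : is_partial_order le2) (n tp k s : nat) :
  0 < tp -> 0 < k -> Mc T1 * #|T1| < s -> Mc T2 * #|T2| < s ->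
  Mc T1 * #|T1| + Mc T2 * #|T2| < n ->
  induced_free (star_le le1 (star_le (@antichain_le k) le2)) (Gset le1 le2 n tp k s).
Proof.
move=> htp hk hs1 hs2 hn.
have hntp : n <= n * tp by rewrite -{1}[n]muln1 leq_mul2l htp orbT.
apply/negP => /existsP [F /and3P [/injectiveP finj /forallP inF /forallP ord]].
have hord : forall u v, grid_le (F u) (F v) = star_le le1 (star_le (@antichain_le k) le2) u v.
  by move=> u v; move/forallP: (ord u) => /(_ v) /eqP.
have hC : forall i : 'I_k, F (inr (inl i)) \in Cset n tp k s.
  move=> i; have := inF (inr (inl i)); rewrite /Gset !in_setU -orbA => /or3P [xL|xC|xU] //.
  - exfalso; apply: (L_nocopy po1 (psi := fun y => F (inl y)) htp xL).
    + by move=> u v; rewrite hord.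
    + move=> u; rewrite hord /=; apply/eqP => /finj //.
    move=> u; have := inF (inl u); have hl : grid_le (F (inl u)) (F (inr (inl i))) by rewrite hord.
    have hne : F (inl u) != F (inr (inl i)) by apply/eqP => /finj.
    have := rank_lt hl hne; have := rank_Lle po1 htp xL.
    rewrite /Gset !in_setU -orbA => h1 h2 /or3P [//|/(rank_C htp) [h3 _]|/(rank_Uge po2 htp) h3]; exfalso; move: hs1 hs2 hn h1 h2 h3; set R1 := Mc T1 * #|T1|; set R2 := Mc T2 * #|T2|; set r1 := rank _; set r2 := rank _; lia.
  - exfalso; move: xU => /imsetP [x' x'L ex].
    apply: (L_nocopy (po_dual po2) (psi := fun z => neg (F (inr (inr z)))) htp x'L).
    + by move=> u v; rewrite neg_le hord.
    + move=> u; rewrite -[x'](negK x') -ex neg_le hord /=.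
      by apply/eqP => /neg_inj /finj.
    move=> u; have := inF (inr (inr u)).
    have hl : grid_le (F (inr (inl i))) (F (inr (inr u))) by rewrite hord.
    have hne : F (inr (inl i)) != F (inr (inr u)) by apply/eqP => /finj.
    have hxU : F (inr (inl i)) \in Uset le2 n tp by rewrite ex; apply/imsetP; exists x'.
    have := rank_lt hl hne; have := rank_Uge po2 htp hxU.
    rewrite /Gset !in_setU -orbA => h0 h1 /or3P [/(rank_Lle po1 htp) h3|/(rank_C htp) [_ h3]|hU].
    * exfalso; move: hs1 hs2 hn h0 h1 h3 hntp; set R1 := Mc T1 * #|T1|; set R2 := Mc T2 * #|T2|; set r1 := rank _; set r2 := rank _; lia.
    * exfalso; move: hs1 hs2 hn h0 h1 h3 hntp; set R1 := Mc T1 * #|T1|; set R2 := Mc T2 * #|T2|; set r1 := rank _; set r2 := rank _; lia.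
    by case/imsetP: hU => w wL ->; rewrite negK.
have [pp hpp] : exists pp : 'I_k -> ('I_k.-1 * 'I_n.+1)%type,
    forall i, (pp i \in [set p : ('I_k.-1 * 'I_n.+1)%type | (k.-1 + s <= p.2) && (p.2 + s <= n)])
       /\ F (inr (inl i)) = cvec n tp k (pp i).1 (pp i).2.
  apply: (@fin_all_exists _ (fun _ => ('I_k.-1 * 'I_n.+1)%type) (fun i p => (p \in [set p : ('I_k.-1 * 'I_n.+1)%type | (k.-1 + s <= p.2) && (p.2 + s <= n)]) /\ F (inr (inl i)) = cvec n tp k p.1 p.2)) => i.
  by have /imsetP [p hp e] := hC i; exists p.
have : ~~ injectiveb (fun i => (pp i).1).
  apply/negP => /injectiveP /leq_card; rewrite !card_ord; lia.
case/injectivePn => i [i' hne e].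
have [hi1 ei] := hpp i; have [hi2 ei'] := hpp i'.
have hfalse : forall a b : 'I_k, a != b -> grid_le (F (inr (inl a))) (F (inr (inl b))) = false.
  by move=> a b ab; rewrite hord /= /antichain_le (negbTE ab).
case: (leqP (pp i).2 (pp i').2) => hm.
  have := hfalse _ _ hne; rewrite ei ei' e cvec_mono //.
have := hfalse i' i; rewrite ei ei' e cvec_mono ?(ltnW hm) // eq_sym => /(_ hne) //.
Qed.

Lemma kap_exists (X : finType) (n : nat) (I : {set 'I_n}) (i0 : 'I_n) :
  #|X| <= #|I| -> exists ka : {ffun X -> 'I_n}, injective ka /\ forall u, ka u \in I.
Proof.
move=> hc; exists [ffun u => nth i0 (enum I) (enum_rank u)]; split.
  move=> u v; rewrite !ffunE => /eqP; rewrite nth_uniq ?enum_uniq //.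
  - by move/eqP/val_inj/enum_rank_inj.
  - by rewrite -cardE; apply: leq_trans hc.
  by rewrite -cardE; apply: leq_trans hc.
by move=> u; rewrite ffunE -mem_enum mem_nth // -cardE; apply: leq_trans hc.
Qed.

Lemma star_anti (T1 : finType) (le1 : rel T1) (T2 : finType) (le2 : rel T2) :
  antisymmetric le1 -> antisymmetric le2 -> antisymmetric (star_le le1 le2).
Proof.
move=> a1 a2 [x|x] [y|y] //=; first by move/a1 ->.
by move/a2 ->.
Qed.

Lemma anti_anti (k : nat) : antisymmetric (@antichain_le k).
Proof. by move=> x y /andP [/eqP -> _]. Qed.

Lemma sat_copy (T1 : finType) (le1 : rel T1) (po1 : is_partial_order le1)
  (T2 : finType) (le2 : rel T2) (po2 : is_partial_order le2) (n tp k s : nat)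
  (f : grid n tp.+1) (m : nat) :
  0 < tp -> 0 < k -> 0 < n ->
  #|Xc T1| <= s -> #|Xc T2| <= s -> Mc T1 * #|T1| < s -> Mc T2 * #|T2| < s ->
  Mc T1 * #|T1| + Mc T2 * #|T2| < n ->
  m <= n ->
  s <= #|[set i : 'I_n | (k.-1 <= i < m) && (0 < f i)]| ->
  s <= #|[set i : 'I_n | (m <= i) && (f i < tp)]| ->
  (exists i : 'I_n, (k.-1 <= i < m) && (f i < tp)) ->
  (exists i : 'I_n, (m <= i) && (0 < f i)) ->
  exists F, induced_copy (star_le le1 (star_le (@antichain_le k) le2))
                         (f |: Gset le1 le2 n tp k s) F.
Proof.
move=> htp hk hn0 hx1 hx2 hs1 hs2 hn hm hA hB [ic hic] [id hid].
have i0 : 'I_n := Ordinal hn0.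
have [ka1 [k1inj k1I]] := kap_exists i0 (leq_trans hx1 hA).
have [ka2 [k2inj k2J]] := kap_exists i0 (leq_trans hx2 hB).
have hntp : n <= n * tp by rewrite -{1}[n]muln1 leq_mul2l htp orbT.
have hmk : k.-1 + s <= m.
  have hsub : forall i, i \in [set i : 'I_n | (k.-1 <= i < m) && (0 < f i)] -> k.-1 <= i < m.
    by move=> i; rewrite inE => /andP [].
  have := card_sub_interval hm hsub.
  have hs0 : 0 < s by apply: leq_ltn_trans hs1.
  move=> h; have := leq_trans hA h; lia.
have hms : m + s <= n.
  have hsub : forall i, i \in [set i : 'I_n | (m <= i) && (f i < tp)] -> m <= i < n.
    by move=> i; rewrite inE => /andP [-> _]; rewrite ltn_ord.
  have := card_sub_interval (leqnn n) hsub; move=> h; have := leq_trans hB h; lia.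
have rkf1 : s <= rank f.
  apply: (leq_trans hA); apply: rank_ge_card => i /andP [_ //].
have rkf2 : rank f + s <= n * tp.
  apply: (@leq_trans (rank f + #|[set i : 'I_n | (m <= i) && (f i < tp)]|)); first by rewrite leq_add2l.
  by apply: rank_le_card => i /andP [_ //].
have hmn : m < n.+1 by lia.
have Cm : forall j : 'I_k.-1, cvec n tp k j m \in Cset n tp k s.
  move=> j; apply/imsetP; exists (j, Ordinal hmn) => //; rewrite inE /=; lia.
have rkC : forall j : 'I_k.-1, s <= rank (cvec n tp k j m) /\ rank (cvec n tp k j m) + s <= n * tp.
  by move=> j; apply: rank_C htp (Cm j).
have L1 : forall y, phi le1 tp ka1 y \in Lset le1 n tp.
  by move=> y; apply/imsetP; exists (ka1, y) => //; rewrite inE; apply/injectiveP.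
have U2 : forall z, neg (phi (dual le2) tp ka2 z) \in Uset le2 n tp.
  move=> z; apply/imsetP; exists (phi (dual le2) tp ka2 z) => //.
  by apply/imsetP; exists (ka2, z) => //; rewrite inE; apply/injectiveP.
have rkL : forall y, rank (phi le1 tp ka1 y) <= Mc T1 * #|T1|.
  move=> y; have := rank_Lle po1 htp (L1 y). exact.
have rkU : forall z, n * tp <= rank (neg (phi (dual le2) tp ka2 z)) + Mc T2 * #|T2|.
  move=> z; have := rank_Uge po2 htp (U2 z). exact.
pose mid (i : 'I_k) : grid n tp.+1 := if (i : nat) == 0 then f else cvec n tp k (i : nat).-1 m.
have midC : forall i : 'I_k, (i : nat) != 0 -> exists j : 'I_k.-1, mid i = cvec n tp k j m /\ (i : nat) = j.+1.
  move=> i hi; have hj : (i : nat).-1 < k.-1 by have := ltn_ord i; lia.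
  by exists (Ordinal hj); rewrite /mid (negbTE hi) /=; split => //; lia.
have rkM : forall i, s <= rank (mid i) /\ rank (mid i) + s <= n * tp.
  move=> i; case: (eqVneq (i : nat) 0) => hi; first by rewrite /mid hi eqxx.
  by have [j [-> _]] := midC i hi; apply: rkC.
pose F := [ffun u => match u with
                     | inl y => phi le1 tp ka1 y
                     | inr (inl i) => mid i
                     | inr (inr z) => neg (phi (dual le2) tp ka2 z) end].
have nle : forall a b : grid n tp.+1, rank b < rank a -> grid_le a b = false.
  by move=> a b h; apply/negbTE/negP => /rank_le; lia.
have hord : forall u v, grid_le (F u) (F v) = star_le le1 (star_le (@antichain_le k) le2) u v.
  have hRR : Mc T1 * #|T1| + Mc T2 * #|T2| < n * tp by apply: leq_trans hntp.
  move: hs1 hs2 hRR; set R1 := Mc T1 * #|T1|; set R2 := Mc T2 * #|T2|; move=> hs1 hs2 hRR.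
  move=> [y|[i|z]] [y'|[i'|z']]; rewrite !ffunE /=.
  - by rewrite (phi_le po1 _ _ htp k1inj).
  - apply/grid_leP => j; rewrite phiE //; case: existsP => [[u /andP [_ /eqP <-]]|_] //.
    have := k1I u; rewrite inE => /andP [/andP [h1 h2] h3].
    rewrite /mid; case: ifP => _ //; by rewrite cvecE h1 h2 orbT.
  - apply/grid_leP => j; rewrite phiE //; case: existsP => [[u /andP [_ /eqP <-]]|_] //.
    have := k1I u; rewrite inE => /andP [/andP [h1 h2] h3].
    rewrite negE phiE //; case: existsP => [[u' /andP [_ /eqP e]]|_] /=; last by rewrite subn0.
    by have := k2J u'; rewrite inE e => /andP [h4 _]; lia.
  - apply: nle; have := rkL y'; have := rkM i; move: (rank (phi le1 tp ka1 y')) (rank (mid i)) => a b; lia.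
  - case: (eqVneq i i') => [<-|hne]; first by rewrite grid_le_refl /antichain_le eqxx.
    rewrite /antichain_le (negbTE hne).
    case: (eqVneq (i : nat) 0) => hi; case: (eqVneq (i' : nat) 0) => hi'.
    + by case/eqP: hne; apply: val_inj; rewrite /= hi hi'.
    + have [j' [-> _]] := midC i' hi'; rewrite /mid hi eqxx.
      apply/negbTE/grid_leP => /(_ id); rewrite cvecE.
      case/andP: hid => h1 h2; have hj' := ltn_ord j'.
      have -> : ((id : nat) == j') = false by apply/negbTE; lia.
      have -> : (id < m) = false by apply/negbTE; lia.
      by rewrite andbF /=; lia.
    + have [j [-> _]] := midC i hi; rewrite /mid hi' eqxx.
      apply/negbTE/grid_leP => /(_ ic); rewrite cvecE.
      case/andP: hic => /andP [h1 h2] h3; rewrite h1 h2 orbT; lia.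
    have [j [-> e1]] := midC i hi; have [j' [-> e2]] := midC i' hi'.
    apply/negbTE; apply: cvec_incomp => //.
    + by have := ltn_ord j; lia.
    + by apply: contra hne => /eqP e; apply/eqP/val_inj; rewrite /= e1 e2 e.
  - apply/grid_leP => j; rewrite negE phiE //; case: existsP => [[u /andP [_ /eqP <-]]|_] /=; last first.
      by rewrite subn0 -ltnS ltn_ord.
    have := k2J u; rewrite inE => /andP [h1 h2].
    rewrite /mid; case: ifP => hi0; first by rewrite subn1 -ltnS prednK.
    rewrite cvecE; have := ltn_ord i; move/negbT: hi0 => hi0 hik.
    have -> : (ka2 u < m) = false by apply/negbTE; lia.
    have hs0 : 0 < s by apply: leq_ltn_trans hs1.
    have -> : ((ka2 u : nat) == (i : nat).-1) = false by apply/negbTE; lia.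
    by rewrite andbF.
  - apply: nle; have := rkL y'; have := rkU z; move: (rank (phi le1 tp ka1 y')) (rank (neg (phi (dual le2) tp ka2 z))) => a b; lia.
  - apply: nle; have := rkM i'; have := rkU z; move: (rank (mid i')) (rank (neg (phi (dual le2) tp ka2 z))) => a b; lia.
  by rewrite neg_le (phi_le (po_dual po2) _ _ htp k2inj).
exists F; apply/and3P; split.
- apply/injectiveP => u v e; apply: (star_anti (po_anti po1) (star_anti (@anti_anti k) (po_anti po2))).
  by rewrite -!hord e grid_le_refl.
- apply/forallP => [[y|[i|z]]]; rewrite ffunE in_setU1 /Gset !in_setU.
  + by rewrite L1 orbT.
  + case: (eqVneq (i : nat) 0) => hi; first by rewrite /mid hi !eqxx.
    by have [j [-> _]] := midC i hi; rewrite Cm !orbT.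
  + by rewrite U2 !orbT.
by apply/forallP => u; apply/forallP => v; rewrite hord.
Qed.

Definition diffset (n tp : nat) (f : grid n tp.+1) (u w : 'I_tp.+1) (p : 'I_n.+1) : {set 'I_n} :=
  [set i : 'I_n | (f i : nat) != nat_of_ord (if i < p then u else w)].

Definition Zset (n tp K : nat) : {set grid n tp.+1} :=
  [set f | [exists d : ('I_tp.+1 * 'I_tp.+1 * 'I_n.+1)%type, #|diffset f d.1.1 d.1.2 d.2| <= K]].

Lemma diff_bound (n tp K k s : nat) (f : grid n tp.+1) (u w : 'I_tp.+1) (p : 'I_n.+1)
  (m' : nat) (S3 S4 : {set 'I_n}) :
  k.-1 <= n -> m' < n -> #|S3| < s -> #|S4| < s -> k + 2 * s <= K ->
  (forall i : 'I_n, k.-1 <= i -> (i : nat) != m' ->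
     (f i : nat) != nat_of_ord (if i < p then u else w) -> (i \in S3) || (i \in S4)) ->
  #|diffset f u w p| <= K.
Proof.
move=> hk hm h3 h4 hK h.
apply: (@leq_trans (#|[set i : 'I_n | 0 <= i < k.-1]| + #|[set i : 'I_n | m' <= i < m'.+1]| + #|S3| + #|S4|)).
  apply: cardU4 => i; rewrite inE => hi; rewrite !inE /=.
  case: (ltnP i k.-1) => //= hik; case: (eqVneq (i : nat) m') => [->|hne]; first by rewrite leqnn ltnSn.
  have -> : (m' <= i < m'.+1) = false by apply/negbTE; lia.
  by apply: h.
rewrite !card_interval //; lia.
Qed.

Lemma good_m (n tp k s K : nat) (f : grid n tp.+1) :
  0 < tp -> 0 < k -> 0 < s -> k <= n -> k + 2 * s <= K -> f \notin Zset n tp K ->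
  exists m, [/\ m <= n,
    s <= #|[set i : 'I_n | (k.-1 <= i < m) && (0 < f i)]|,
    s <= #|[set i : 'I_n | (m <= i) && (f i < tp)]|,
    (exists i : 'I_n, (k.-1 <= i < m) && (f i < tp)) &
    (exists i : 'I_n, (m <= i) && (0 < f i))].
Proof.
move=> htp hk hs hkn hK hZ.
have inZ : forall (u w : 'I_tp.+1) (p : 'I_n.+1), #|diffset f u w p| <= K -> False.
  move=> u w p h; move/negP: hZ; apply; rewrite inE; apply/existsP; by exists (u, w, p).
have fle : forall i, (f i : nat) <= tp by move=> i; rewrite -ltnS ltn_ord.
pose Aset m := [set i : 'I_n | (k.-1 <= i < m) && (0 < f i)].
pose Bset m := [set i : 'I_n | (m <= i) && (f i < tp)].
pose cP m := [exists i : 'I_n, (k.-1 <= i < m) && (f i < tp)].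
pose P m := [&& m <= n, s <= #|Aset m| & cP m].
have c1 : #|[set i : 'I_n | 0 <= i < k.-1]| = k.-1 by rewrite card_interval //; lia.
have hn1 : 0 < n.+1 by [].
have exP : exists m, P m.
  exists n; rewrite /P leqnn /=; apply/andP; split.
    rewrite leqNgt; apply/negP => hlt; apply: (inZ ord0 ord0 (Ordinal hn1)).
    apply: (@leq_trans (#|[set i : 'I_n | 0 <= i < k.-1]| + #|Aset n| + #|(set0 : {set 'I_n})| + #|(set0 : {set 'I_n})|)).
      apply: cardU4 => i; rewrite !inE /= => hi.
      case: (ltnP i k.-1) => //= hik; rewrite ltn_ord orbF /=; lia.
    rewrite c1 cards0; move: hlt; move: (#|Aset n|) => c hlt; lia.
  case: (boolP (cP n)) => // /negP hc; exfalso; apply: (inZ ord_max ord_max (Ordinal hn1)).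
  apply: (@leq_trans (#|[set i : 'I_n | 0 <= i < k.-1]| + #|(set0 : {set 'I_n})| + #|(set0 : {set 'I_n})| + #|(set0 : {set 'I_n})|)).
    apply: cardU4 => i; rewrite !inE /= => hi.
    case: (ltnP i k.-1) => //= hik; exfalso; apply: hc; apply/existsP; exists i.
    by rewrite hik ltn_ord /= ltn_neqAle hi fle.
  rewrite c1 cards0; lia.
case: (ex_minnP exP) => m0 /and3P [hm0n hAm0 hcm0] minm0.
have m0pos : 0 < m0.
  case: m0 hm0n hAm0 hcm0 minm0 => // _ hA0; exfalso.
  have : #|Aset 0| = 0 by apply/eqP; rewrite cards_eq0; apply/eqP/setP => i; rewrite !inE ltn0 andbF.
  move: hA0; move: (#|Aset 0|) => c; lia.
pose m' := m0.-1.
have hm' : m' < n by rewrite /m'; lia.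
have hkn' : k.-1 <= n by lia.
have hm0e : m0 = m'.+1 by rewrite /m'; lia.
have alt : (#|Aset m'| < s) \/ (~~ cP m').
  case: (ltnP #|Aset m'| s) => [h|h]; [by left|right].
  apply/negP => hc; have : P m' by rewrite /P h hc andbT; lia.
  move/minm0; rewrite /m'; lia.
have hc0 : #|(set0 : {set 'I_n})| < s by rewrite cards0.
have hm0S : m0 < n.+1 by lia.
have hB : s <= #|Bset m0|.
  rewrite leqNgt; apply/negP => hlt; case: alt => [ha|hc'].
  - apply: (inZ ord0 ord_max (Ordinal hm0S)).
    apply: (diff_bound (S3 := Aset m') (S4 := Bset m0) hkn' hm' ha hlt hK) => i hik hne /=.
    rewrite !inE hik /=; case: ifP => him.
      move=> hf; have hi' : i < m' by lia.
      by rewrite hi' /= lt0n; apply/orP; left; exact: hf.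
    move=> hf; have hi' : m0 <= i by lia.
    rewrite hi' /=; apply/orP; right; rewrite ltn_neqAle fle andbT; exact: hf.
  - apply: (inZ ord_max ord_max (Ordinal hm0S)).
    apply: (diff_bound (S3 := set0) (S4 := Bset m0) hkn' hm' hc0 hlt hK) => i hik hne /=.
    rewrite !inE; case: ifP => /= him hf.
      exfalso; move/negP: hc'; apply; apply/existsP; exists i; have hi' : i < m' by lia.
      by rewrite hik hi' /= ltn_neqAle fle andbT; exact: hf.
    by rewrite (_ : m0 <= i) ?ltn_neqAle ?hf ?fle //; lia.
have hd : exists i : 'I_n, (m0 <= i) && (0 < f i).
  apply/existsP; case: (boolP [exists i : 'I_n, (m0 <= i) && (0 < f i)]) => // /negP hd; exfalso.
  have hz : forall i : 'I_n, m0 <= i -> (f i : nat) = 0.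
    move=> i hi; apply/eqP; rewrite -leqn0 leqNgt; apply/negP => hf; apply: hd; apply/existsP; exists i; by rewrite hi hf.
  case: alt => [ha|hc'].
  - apply: (inZ ord0 ord0 (Ordinal hm0S)).
    apply: (diff_bound (S3 := Aset m') (S4 := set0) hkn' hm' ha hc0 hK) => i hik hne /=.
    rewrite !inE hik /= orbF => hf; have hf' : (f i : nat) != 0 by move: hf; case: ifP.
    case: (ltnP i m0) => him.
      have hi' : i < m' by lia.
      by rewrite hi' lt0n hf'.
    by move: hf'; rewrite hz.
  - apply: (inZ ord_max ord0 (Ordinal hm0S)).
    apply: (diff_bound (S3 := set0) (S4 := set0) hkn' hm' hc0 hc0 hK) => i hik hne /=.
    rewrite !inE; case: ifP => /= him hf.
      exfalso; move/negP: hc'; apply; apply/existsP; exists i; have hi' : i < m' by lia.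
      by rewrite hik hi' /= ltn_neqAle fle andbT; exact: hf.
    by move: hf; rewrite hz //; lia.
exists m0; split => //.
by case/existsP: hcm0 => i hi; exists i.
Qed.

Definition Dty (n tp K : nat) : finType :=
  (('I_tp.+1 * 'I_tp.+1 * 'I_n.+1) * ({ffun 'I_K -> 'I_n} * {ffun 'I_K -> 'I_tp.+1}))%type.

Definition dec (n tp K : nat) (d : Dty n tp K) : grid n tp.+1 :=
  [ffun i => if [pick q | d.2.1 q == i] is Some q then d.2.2 q
             else (if i < d.1.2 then d.1.1.1 else d.1.1.2)].

Lemma Zset_card (n tp K : nat) : 0 < n ->
  #|Zset n tp K| <= (tp.+1 * tp.+1 * n.+1) * (n ^ K * tp.+1 ^ K).
Proof.
move=> hn; have i0 : 'I_n := Ordinal hn.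
apply: (@leq_trans #|[set dec x | x : Dty n tp K in setT]|).
  apply: subset_leq_card; apply/subsetP => f; rewrite inE => /existsP [[[u w] p] /= hD].
  pose Dif := diffset f u w p.
  pose pos := [ffun q : 'I_K => nth i0 (enum Dif) q].
  pose vals := [ffun q : 'I_K => f (pos q)].
  apply/imsetP; exists ((u, w, p), (pos, vals)); first by rewrite inE.
  apply/esym.
  apply/ffunP => i; rewrite ffunE /=; case: pickP => [q /eqP hq|hnone].
    by rewrite ffunE hq.
  have : i \notin Dif.
    apply/negP => hi.
    have hidx : index i (enum Dif) < K by apply: leq_trans hD; rewrite cardE index_mem mem_enum.
    have := hnone (Ordinal hidx); rewrite ffunE /= nth_index ?mem_enum // eqxx //.
  by rewrite inE negbK => /eqP e; apply: val_inj.
apply: leq_trans (leq_imset_card _ _) _.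
by rewrite cardsT /Dty !card_prod !card_ffun !card_ord.
Qed.

Lemma copy_mono (T : finType) (le : rel T) (n t : nat) (A B : {set grid n t}) phi :
  induced_copy le A phi -> A \subset B -> induced_copy le B phi.
Proof.
move=> /and3P [h1 /forallP h2 h3] /subsetP AB; apply/and3P; split => //.
by apply/forallP => x; apply: AB.
Qed.

Lemma exists_sat (T : finType) (le : rel T) (n t : nat) (G Z : {set grid n t}) :
  induced_free le G ->
  (forall f, f \notin Z -> f \notin G -> exists phi, induced_copy le (f |: G) phi) ->
  exists F : {set grid n t}, induced_saturated le F /\ #|F| <= #|G :|: Z|.
Proof.
move=> Gfree hsat.
pose Pg (F : {set grid n t}) := [&& G \subset F, F \subset G :|: Z & induced_free le F].
have PG : Pg G by rewrite /Pg subxx subsetUl Gfree.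
case: (arg_maxnP (fun F : {set grid n t} => #|F|) PG) => F /and3P [GF FGZ Ffree] Fmax.
exists F; split; last by apply: subset_leq_card.
rewrite /induced_saturated Ffree /=; apply/forallP => f; apply/implyP => fF.
case: (boolP (f \in G :|: Z)) => hf.
  have : ~~ Pg (f |: F).
    by apply/negP => /Fmax; rewrite cardsU1 fF; lia.
  rewrite /Pg (subset_trans GF (subsetUr _ _)) /=.
  have -> : f |: F \subset G :|: Z by rewrite subUset sub1set hf FGZ.
  by rewrite /induced_free negbK.
have fZ : f \notin Z by apply: contra hf; rewrite inE => ->; rewrite orbT.
have fG : f \notin G by apply: contra hf; rewrite inE => ->.
have [phi hphi] := hsat f fZ fG.
apply/existsP; exists phi; apply: copy_mono hphi _.
by apply: setUS.
Qed.

Lemma bigmin_le_seq (X : eqType) (P : pred X) (g : X -> nat) (d : nat) (r : seq X) x0 :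
  x0 \in r -> P x0 -> \big[minn/d]_(x <- r | P x) g x <= g x0.
Proof.
elim: r => // y r IH; rewrite inE => /orP [/eqP <-|hr] hP; rewrite big_cons.
  by rewrite hP geq_minl.
case: (P y); last by apply: IH.
by apply: leq_trans (geq_minr _ _) (IH hr hP).
Qed.

Lemma sat_le (T : finType) (le : rel T) (n t : nat) (F : {set grid n t}) :
  induced_saturated le F -> sat_star le n t <= #|F|.
Proof.
move=> hF; rewrite /sat_star; apply: bigmin_le_seq => //; exact: mem_index_enum.
Qed.

Lemma arith (n t a1 a2 k x1 x2 K : nat) : 2 <= n -> 1 <= t -> a1 <= n -> a2 <= n -> k <= n -> 1 <= K ->
  n ^ x1 * a1 + k.-1 * n.+1 + n ^ x2 * a2 + (t * t * n.+1) * (n ^ K * t ^ K)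
    <= (n * t ^ 2) ^ (x1 + x2 + K + 2 + K + 4).
Proof.
move=> hn ht h1 h2 hk hK.
set E := x1 + x2 + K + 2.
have hn0 : 0 < n by lia.
have pw : forall a b, a <= b -> n ^ a <= n ^ b by move=> a b; apply: leq_pexp2l.
have hP1 : n ^ x1 * a1 <= n ^ E.
  apply: (@leq_trans (n ^ x1 * n)); first by rewrite leq_mul2l h1 orbT.
  by rewrite -expnSr; apply: pw; rewrite /E; lia.
have hP3 : n ^ x2 * a2 <= n ^ E.
  apply: (@leq_trans (n ^ x2 * n)); first by rewrite leq_mul2l h2 orbT.
  by rewrite -expnSr; apply: pw; rewrite /E; lia.
have hnn : n.+1 <= n * n by nia.
have hP2 : k.-1 * n.+1 <= n ^ E.
  apply: (@leq_trans (n * (n * n))); first by apply: leq_mul; lia.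
  have -> : n * (n * n) = n ^ 3 by rewrite !expnS expn0 muln1.
  by apply: pw; rewrite /E; lia.
have hP4 : (t * t * n.+1) * (n ^ K * t ^ K) <= n ^ E * t ^ (K + 2).
  have -> : (t * t * n.+1) * (n ^ K * t ^ K) = (n.+1 * n ^ K) * t ^ (K + 2).
    by rewrite addn2 !expnS; move: (n ^ K) (t ^ K) => X Y; nia.
  rewrite leq_mul2r; apply/orP; right.
  apply: (@leq_trans (n * n * n ^ K)); first by rewrite leq_mul2r hnn orbT.
  have -> : n * n * n ^ K = n ^ (K + 2) by rewrite addn2 !expnS mulnA.
  by apply: pw; rewrite /E; lia.
have hQ : 1 <= t ^ (K + 2) by rewrite expn_gt0 ht.
have hsum : n ^ x1 * a1 + k.-1 * n.+1 + n ^ x2 * a2 + (t * t * n.+1) * (n ^ K * t ^ K)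
            <= n ^ (E + 2) * t ^ (K + 2).
  rewrite expnD.
  move: hP1 hP2 hP3 hP4 hQ; move: (n ^ E) (t ^ (K + 2)) (n ^ x1 * a1) (k.-1 * n.+1) (n ^ x2 * a2)
      ((t * t * n.+1) * (n ^ K * t ^ K)) => P Q A B C D hA hB hC hD hQ.
  have h4 : 4 <= n ^ 2 by rewrite expnS expn1; nia.
  nia.
apply: (leq_trans hsum); rewrite expnMn -expnM; apply: leq_mul.
  by apply: pw; rewrite /E; lia.
by apply: leq_pexp2l => //; lia.
Qed.

Lemma card_Lset (T : finType) (le : rel T) (n tp : nat) :
  #|Lset le n tp| <= n ^ #|Xc T| * #|T|.
Proof.
apply: leq_trans (leq_imset_card _ _) _; apply: leq_trans (max_card _) _.
by rewrite card_prod card_ffun card_ord.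
Qed.

Lemma card_Uset (T : finType) (le : rel T) (n tp : nat) :
  #|Uset le n tp| <= n ^ #|Xc T| * #|T|.
Proof. by apply: leq_trans (leq_imset_card _ _) (card_Lset _ _ _). Qed.

Lemma card_Cset (n tp k s : nat) : #|Cset n tp k s| <= k.-1 * n.+1.
Proof.
apply: leq_trans (leq_imset_card _ _) _; apply: leq_trans (max_card _) _.
by rewrite card_prod !card_ord.
Qed.

Theorem mainTheorem5 (k : nat) (hk : 1 <= k)
  (T1 : finType) (le1 : rel T1) (h1 : is_partial_order le1)
  (T2 : finType) (le2 : rel T2) (h2 : is_partial_order le2) :
  exists c : nat, forall t : nat, 2 <= t ->
    exists N : nat, forall n : nat, N <= n ->
      embeds (star_le le1 (star_le (@antichain_le k) le2)) n t ->
      sat_star (star_le le1 (star_le (@antichain_le k) le2)) n t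
        <= (n * t ^ 2) ^ c.
Proof.
pose R1 := Mc T1 * #|T1|; pose R2 := Mc T2 * #|T2|.
pose s := #|Xc T1| + #|Xc T2| + R1 + R2 + 1.
pose K := k + 2 * s.
exists (#|Xc T1| + #|Xc T2| + K + 2 + K + 4) => t ht.
exists (R1 + R2 + #|T1| + #|T2| + k + 2) => n hn _.
case: t ht => [//|tp] ht; have htp : 0 < tp by lia.
have hs1 : R1 < s by rewrite /s; lia.
have hs2 : R2 < s by rewrite /s; lia.
have hx1 : #|Xc T1| <= s by rewrite /s; lia.
have hx2 : #|Xc T2| <= s by rewrite /s; lia.
have hRn : R1 + R2 < n by lia.
have hn0 : 0 < n by lia.
have hG := G_free h1 h2 (n := n) (tp := tp) (k := k) (s := s) htp hk hs1 hs2 hRn.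
have hsat : forall f, f \notin Zset n tp K -> f \notin Gset le1 le2 n tp k s ->
    exists phi, induced_copy (star_le le1 (star_le (@antichain_le k) le2)) (f |: Gset le1 le2 n tp k s) phi.
  move=> f fZ _.
  have hs0 : 0 < s by rewrite /s; lia.
  have hkn : k <= n by lia.
  have [m [hm hA hB hc hd]] := good_m htp hk hs0 hkn (leqnn K) fZ.
  exact: (sat_copy h1 h2 htp hk hn0 hx1 hx2 hs1 hs2 hRn hm hA hB hc hd).
have [F [Fs Fc]] := exists_sat hG hsat.
apply: leq_trans (sat_le Fs) _; apply: leq_trans Fc _.
have hU : #|Gset le1 le2 n tp k s :|: Zset n tp K| <=
   n ^ #|Xc T1| * #|T1| + k.-1 * n.+1 + n ^ #|Xc T2| * #|T2| + (tp.+1 * tp.+1 * n.+1) * (n ^ K * tp.+1 ^ K).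
  have := card_Lset le1 n tp; have := card_Uset le2 n tp; have := card_Cset n tp k s.
  have := Zset_card tp K hn0.
  rewrite /Gset !cardsU.
  move: (#|Lset le1 n tp|) (#|Cset n tp k s|) (#|Uset le2 n tp|) (#|Zset n tp K|) => a b c d.
  lia.
apply: leq_trans hU _; apply: arith; rewrite ?ltnS //; lia.
Qed.
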